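(* Let $n$ be a positive integer and, for $k\in\{0,\dots,n-1\}$, let \[ b_k=(-1)^{n-k}\frac{n!}{k!}\binom{2n-k-1}{n-1},\qquad \beta_k=(-1)^{n-1}\frac{(2n-k-1)!}{k!\,(n-k-1)!}. \] Let $\widetilde\Delta(z)=z^n+\sum_{k=0}^{n-1}b_kz^k+e^{-z}\sum_{k=0}^{n-1}\beta_kz^k$. If $z\in\mathbb C$ is a root of $\widetilde\Delta$ with $z\neq0$, then $\operatorname{Re}z<0$. *)

(* Defs.v *)
From Stdlib Require Import Reals.
From Coquelicot Require Import Coquelicot.

Open Scope R_scope.

Definition Cexp (z : C) : C :=
  (exp (Re z) * cos (Im z), exp (Re z) * sin (Im z)).

Definition bcoef (n k : nat) : R :=
  (-1) ^ (n - k) * (INR (Factorial.fact n) / INR (Factorial.fact k)) * Binomial.C (2 * n - k - 1) (n - 1).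

Definition betacoef (n k : nat) : R :=
  (-1) ^ (n - 1) * (INR (Factorial.fact (2 * n - k - 1)) / (INR (Factorial.fact k) * INR (Factorial.fact (n - k - 1)))).

Definition Delta_tilde (n : nat) (z : C) : C :=
  (Cpow z n
   + sum_n (fun k => RtoC (bcoef n k) * Cpow z k) (n - 1)
   + Cexp (- z) * sum_n (fun k => RtoC (betacoef n k) * Cpow z k) (n - 1))%C.

(* Main.v *)
Require Import Defs.
From Stdlib Require Import Reals.
From Coquelicot Require Import Coquelicot.
From Stdlib Require Import Lra Lia Factorial.
Open Scope R_scope.

Ltac rring := lazymatch goal with |- @eq _ ?a ?b => change (@eq R a b) end; ring.
Ltac rfield := lazymatch goal with |- @eq _ ?a ?b => change (@eq R a b) end; field.

Definition cont (f : R -> R) := forall s, continuous f s.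

Definition ec (x y r : R) := exp (r*x) * cos (r*y).
Definition es (x y r : R) := exp (r*x) * sin (r*y).

Lemma ec_der x y r : is_derive (ec x y) r (x * ec x y r - y * es x y r).
Proof. unfold ec, es. auto_derive; auto. ring. Qed.
Lemma es_der x y r : is_derive (es x y) r (x * es x y r + y * ec x y r).
Proof. unfold ec, es. auto_derive; auto. ring. Qed.


Lemma cont_mult f g : cont f -> cont g -> cont (fun s => f s * g s).
Proof. intros Hf Hg s. apply (continuous_mult f g). apply Hf. apply Hg. Qed.
Lemma cont_plus f g : cont f -> cont g -> cont (fun s => f s + g s).
Proof. intros Hf Hg s. apply (continuous_plus f g). apply Hf. apply Hg. Qed.
Lemma cont_comp f g : cont f -> cont g -> cont (fun s => g (f s)).
Proof. intros Hf Hg s. apply (continuous_comp f g). apply Hf. apply Hg. Qed.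
Lemma cont_const c : cont (fun _ => c).
Proof. intro s. apply continuous_const. Qed.
Lemma cont_id : cont (fun s => s).
Proof. intro s. apply continuous_id. Qed.
Lemma cont_der f df : (forall s, is_derive f s (df s)) -> cont f.
Proof. intros H s. apply (ex_derive_continuous (K:=R_AbsRing) (V:=R_NormedModule)). eexists. apply H. Qed.
Lemma ec_scale t x y r : ec (t*x) (t*y) r = ec x y (r*t).
Proof. unfold ec. replace (r*(t*x)) with (r*t*x) by ring. replace (r*(t*y)) with (r*t*y) by ring. reflexivity. Qed.
Lemma es_scale t x y r : es (t*x) (t*y) r = es x y (r*t).
Proof. unfold es. replace (r*(t*x)) with (r*t*x) by ring. replace (r*(t*y)) with (r*t*y) by ring. reflexivity. Qed.
Lemma ec_add x y a b : ec x y (a+b) = ec x y a * ec x y b - es x y a * es x y b.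
Proof. unfold ec, es. replace ((a+b)*x) with (a*x+b*x) by ring. replace ((a+b)*y) with (a*y+b*y) by ring.
  rewrite exp_plus, cos_plus. ring. Qed.
Lemma es_add x y a b : es x y (a+b) = es x y a * ec x y b + ec x y a * es x y b.
Proof. unfold ec, es. replace ((a+b)*x) with (a*x+b*x) by ring. replace ((a+b)*y) with (a*y+b*y) by ring.
  rewrite exp_plus, sin_plus. ring. Qed.
Lemma ec_0 x y : ec x y 0 = 1.
Proof. unfold ec. rewrite !Rmult_0_l, exp_0, cos_0. ring. Qed.
Lemma es_0 x y : es x y 0 = 0.
Proof. unfold es. rewrite !Rmult_0_l, sin_0. ring. Qed.
Lemma ec_es_pos x y r : 0 < ec x y r ^ 2 + es x y r ^ 2.
Proof. unfold ec, es.
  replace ((exp (r*x) * cos (r*y))^2 + (exp (r*x) * sin (r*y))^2) with (exp (r*x) ^ 2 * (sin (r*y)^2 + cos (r*y)^2)) by ring.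
  assert (H := sin2_cos2 (r*y)). unfold Rsqr in H. replace (sin (r*y)^2 + cos (r*y)^2) with 1 by (rewrite <- H; ring).
  rewrite Rmult_1_r. apply pow_lt. apply exp_pos. Qed.
Lemma Cexp_CE x y : Cexp (- (x, y))%C = (ec x y (-1), es x y (-1)).
Proof. unfold Cexp, ec, es, Re, Im. simpl. replace (-1*x) with (-x) by ring. replace (-1*y) with (-y) by ring. reflexivity. Qed.

Global Opaque ec es.

Lemma ec_cont x y : cont (ec x y).
Proof. apply (cont_der _ _ (ec_der x y)). Qed.
Lemma es_cont x y : cont (es x y).
Proof. apply (cont_der _ _ (es_der x y)). Qed.

Lemma RInt_extR (f g : R -> R) : (forall s, 0 <= s <= 1 -> f s = g s) -> RInt f 0 1 = RInt g 0 1.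
Proof.
  intro H. apply (RInt_ext (V:=R_CompleteNormedModule)). intros s Hs.
  rewrite Rmin_left in Hs by lra. rewrite Rmax_right in Hs by lra. apply H; lra.
Qed.

Lemma ex_RInt_cont f : cont f -> ex_RInt f 0 1.
Proof. intro H. apply (ex_RInt_continuous (V:=R_CompleteNormedModule)). intros; apply H. Qed.

Lemma RInt_lin2 f g a b : ex_RInt f 0 1 -> ex_RInt g 0 1 ->
  RInt (fun s => a * f s + b * g s) 0 1 = a * RInt f 0 1 + b * RInt g 0 1.
Proof.
  intros [If Hf] [Ig Hg].
  apply is_RInt_unique.
  rewrite (is_RInt_unique _ _ _ _ Hf), (is_RInt_unique _ _ _ _ Hg).
  apply (is_RInt_plus (fun s => a * f s) (fun s => b * g s)).
  apply (is_RInt_scal f 0 1 a). exact Hf.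
  apply (is_RInt_scal g 0 1 b). exact Hg.
Qed.

Lemma ex_RInt_lin2 f g a b : ex_RInt f 0 1 -> ex_RInt g 0 1 ->
  ex_RInt (fun s => a * f s + b * g s) 0 1.
Proof.
  intros [If Hf] [Ig Hg]. eexists.
  apply (is_RInt_plus (fun s => a * f s) (fun s => b * g s)).
  apply (is_RInt_scal f 0 1 a). exact Hf.
  apply (is_RInt_scal g 0 1 b). exact Hg.
Qed.

Lemma RInt_lin3 f g h a b c : ex_RInt f 0 1 -> ex_RInt g 0 1 -> ex_RInt h 0 1 ->
  RInt (fun s => a * f s + b * g s + c * h s) 0 1 = a * RInt f 0 1 + b * RInt g 0 1 + c * RInt h 0 1.
Proof.
  intros Hf Hg Hh.
  transitivity (RInt (fun s => 1 * (a*f s + b*g s) + c * h s) 0 1).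
  apply RInt_extR; intros; ring.
  rewrite RInt_lin2; [rewrite RInt_lin2; [idtac|exact Hf|exact Hg] | apply ex_RInt_lin2; assumption | exact Hh].
  rring.
Qed.

Lemma RInt_ftc F dF : (forall s, is_derive F s (dF s)) -> cont dF ->
  RInt dF 0 1 = F 1 - F 0.
Proof.
  intros H Hc. apply is_RInt_unique.
  apply (is_RInt_derive F dF 0 1). intros; apply H. intros; apply Hc.
Qed.

Lemma param_deriv (w v E dE : R -> R) t : cont w -> cont v ->
  (forall r, is_derive E r (dE r)) -> cont dE ->
  is_derive (fun t => RInt (fun s => w s * E (v s * t)) 0 1) t
    (RInt (fun s => w s * (v s * dE (v s * t))) 0 1).
Proof.
  intros Hw Hv HE HdE.
  assert (HD : forall u s, Derive (fun z => w s * E (v s * z)) u = w s * (v s * dE (v s * u))).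
  { intros u s. apply is_derive_unique.
    apply (is_derive_scal (fun z => E (v s * z)) u (w s)).
    assert (Hl : is_derive (fun z : R => v s * z) u (v s)) by (auto_derive; [auto| ring]).
    exact (is_derive_comp E (fun z => v s * z) u _ _ (HE _) Hl). }
  assert (H := is_derive_RInt_param (fun u s => w s * E (v s * u)) 0 1 t).
  simpl in H.
  rewrite (RInt_extR (fun s => w s * (v s * dE (v s * t))) (fun s => Derive (fun u => w s * E (v s * u)) t)).
  2: { intros; rewrite HD; reflexivity. }
  apply H.
  - apply filter_forall. intros x0 s _. eexists.
    apply (is_derive_scal (fun z => E (v s * z)) x0 (w s)).
    assert (Hl : is_derive (fun z : R => v s * z) x0 (v s)) by (auto_derive; [auto| ring]).
    exact (is_derive_comp E (fun z => v s * z) x0 _ _ (HE _) Hl).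
  - intros s _.
    apply continuity_2d_pt_ext with (f := fun u s0 => w s0 * (v s0 * dE (v s0 * u))).
    { intros; rewrite HD; reflexivity. }
    apply continuity_2d_pt_mult.
    + apply (continuity_1d_2d_pt_comp w (fun _ s0 => s0)). apply continuity_pt_filterlim, Hw.
      apply continuity_2d_pt_id2.
    + apply continuity_2d_pt_mult.
      * apply (continuity_1d_2d_pt_comp v (fun _ s0 => s0)). apply continuity_pt_filterlim, Hv.
        apply continuity_2d_pt_id2.
      * apply (continuity_1d_2d_pt_comp dE (fun u s0 => v s0 * u)). apply continuity_pt_filterlim, HdE.
        apply continuity_2d_pt_mult.
        apply (continuity_1d_2d_pt_comp v (fun _ s0 => s0)). apply continuity_pt_filterlim, Hv.
        apply continuity_2d_pt_id2. apply continuity_2d_pt_id1.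
  - apply filter_forall. intro y0. apply ex_RInt_cont.
    apply cont_mult. exact Hw.
    apply (cont_comp (fun s => v s * y0) E).
    apply cont_mult. exact Hv. apply cont_const.
    apply (cont_der E dE HE).
Qed.

Lemma is_derive_val (f : R -> R) t l l' : is_derive f t l -> l = l' -> is_derive f t l'.
Proof. intros H E; subst; exact H. Qed.

Definition vv (s : R) := /2 - s.
Definition LR x y (w : R -> R) : R := RInt (fun s => w s * ec x y (vv s)) 0 1.
Definition LI x y (w : R -> R) : R := RInt (fun s => w s * es x y (vv s)) 0 1.
Definition L (z : C) (w : R -> R) : C := (LR (fst z) (snd z) w, LI (fst z) (snd z) w).
Definition CE (z : C) (r : R) : C := (ec (fst z) (snd z) r, es (fst z) (snd z) r).

Lemma cont_vv : cont vv.
Proof. unfold vv. apply cont_plus. apply cont_const. 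
  apply (cont_der _ (fun _ => -1)). intro; auto_derive; auto. Qed.

Lemma cont_ecv x y : cont (fun s => ec x y (vv s)).
Proof. apply (cont_comp vv (ec x y)). apply cont_vv. apply ec_cont. Qed.
Lemma cont_esv x y : cont (fun s => es x y (vv s)).
Proof. apply (cont_comp vv (es x y)). apply cont_vv. apply es_cont. Qed.

Lemma cont_lin3 f g h a b c : cont f -> cont g -> cont h -> cont (fun s => a * f s + b * g s + c * h s).
Proof.
  intros Hf Hg Hh. apply (cont_plus (fun s => a * f s + b * g s) (fun s => c * h s)).
  apply (cont_plus (fun s => a * f s) (fun s => b * g s)).
  apply (cont_mult (fun _ => a) f). apply cont_const. exact Hf.
  apply (cont_mult (fun _ => b) g). apply cont_const. exact Hg.
  apply (cont_mult (fun _ => c) h). apply cont_const. exact Hh.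
Qed.

Lemma ex_LR x y w : cont w -> ex_RInt (fun s => w s * ec x y (vv s)) 0 1.
Proof. intro; apply ex_RInt_cont, cont_mult; auto. apply (cont_comp vv (ec x y)). apply cont_vv. apply ec_cont. Qed.
Lemma ex_LI x y w : cont w -> ex_RInt (fun s => w s * es x y (vv s)) 0 1.
Proof. intro; apply ex_RInt_cont, cont_mult; auto. apply (cont_comp vv (es x y)). apply cont_vv. apply es_cont. Qed.

Lemma Ceq (a b : C) : fst a = fst b -> snd a = snd b -> a = b.
Proof. destruct a, b; simpl; intros; subst; auto. Qed.

Lemma L_ext z w1 w2 : (forall s, 0 <= s <= 1 -> w1 s = w2 s) -> L z w1 = L z w2.
Proof.
  intro H. unfold L, LR, LI. f_equal; apply RInt_extR; intros; rewrite H; auto.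
Qed.

Lemma L_lin z w1 w2 a b : cont w1 -> cont w2 ->
  L z (fun s => a * w1 s + b * w2 s) = (RtoC a * L z w1 + RtoC b * L z w2)%C.
Proof.
  intros H1 H2. destruct z as [x y]. apply Ceq; simpl; unfold LR, LI.
  - transitivity (a * LR x y w1 + b * LR x y w2). 2: { unfold LR; ring. }
    unfold LR. rewrite <- RInt_lin2 by (apply ex_LR; auto). apply RInt_extR; intros; ring.
  - transitivity (a * LI x y w1 + b * LI x y w2). 2: { unfold LI; ring. }
    unfold LI. rewrite <- RInt_lin2 by (apply ex_LI; auto). apply RInt_extR; intros; ring.
Qed.

Lemma L_zero z : L z (fun _ => 0) = RtoC 0.
Proof.
  destruct z as [x y]. unfold L, LR, LI; simpl.
  apply Ceq; simpl.
  - rewrite (RInt_extR _ (fun s => 0 * 0 + 0 * 0)) by (intros; ring).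
    rewrite RInt_lin2. ring. apply ex_RInt_cont, cont_const. apply ex_RInt_cont, cont_const.
  - rewrite (RInt_extR _ (fun s => 0 * 0 + 0 * 0)) by (intros; ring).
    rewrite RInt_lin2. ring. apply ex_RInt_cont, cont_const. apply ex_RInt_cont, cont_const.
Qed.

Lemma L_ibp z (q dq : R -> R) : (forall s, is_derive q s (dq s)) -> cont dq ->
  (z * L z q = L z dq + (RtoC (q 0) * CE z (/2) - RtoC (q 1) * CE z (-/2)))%C.
Proof.
  intros Hq Hdq. assert (Hcq : cont q) by (apply (cont_der q dq Hq)).
  destruct z as [x y]. unfold L, CE; apply Ceq; simpl.
  - assert (HF : forall s, is_derive (fun s => q s * ec x y (vv s)) s
       (1 * (dq s * ec x y (vv s)) + (- x) * (q s * ec x y (vv s)) + y * (q s * es x y (vv s)))).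
    { intro s. unfold vv. 
      assert (H1 := ec_der x y (/2 - s)).
      assert (H2 : is_derive (fun s => ec x y (/2 - s)) s (-1 * (x * ec x y (/2 - s) - y * es x y (/2 - s)))).
      { apply (is_derive_comp (ec x y) (fun s => /2 - s) s _ (-1) H1). auto_derive; auto; ring. }
      assert (H3 := is_derive_mult q (fun s => ec x y (/2 - s)) s _ _ (Hq s) H2 Rmult_comm).
      eapply is_derive_ext; [|eapply filterdiff_ext_lin; [exact H3|]].
      intro; reflexivity. intro u. simpl. unfold scal; simpl; unfold mult, plus; simpl. ring. }
    assert (Hc : cont (fun s => 1 * (dq s * ec x y (vv s)) + (- x) * (q s * ec x y (vv s)) + y * (q s * es x y (vv s)))).
    { apply (cont_lin3 (fun s => dq s * ec x y (vv s)) (fun s => q s * ec x y (vv s)) (fun s => q s * es x y (vv s)));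
      [apply (cont_mult dq) | apply (cont_mult q) | apply (cont_mult q)]; auto; first [apply cont_ecv|apply cont_esv]. }
    assert (HH := RInt_ftc _ _ HF Hc).
    rewrite (RInt_lin3 (fun s => dq s * ec x y (vv s)) (fun s => q s * ec x y (vv s)) (fun s => q s * es x y (vv s))) in HH; [| apply ex_LR; exact Hdq | apply ex_LR; exact Hcq | apply ex_LI; exact Hcq].
    unfold LR, LI. unfold vv in HH. 
    replace (/2 - 1) with (-/2) in HH by field. replace (/2 - 0) with (/2) in HH by field.
    unfold vv. lra.
  - assert (HF : forall s, is_derive (fun s => q s * es x y (vv s)) s
       (1 * (dq s * es x y (vv s)) + (- x) * (q s * es x y (vv s)) + (- y) * (q s * ec x y (vv s)))).
    { intro s. unfold vv. 
      assert (H1 := es_der x y (/2 - s)).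
      assert (H2 : is_derive (fun s => es x y (/2 - s)) s (-1 * (x * es x y (/2 - s) + y * ec x y (/2 - s)))).
      { apply (is_derive_comp (es x y) (fun s => /2 - s) s _ (-1) H1). auto_derive; auto; ring. }
      assert (H3 := is_derive_mult q (fun s => es x y (/2 - s)) s _ _ (Hq s) H2 Rmult_comm).
      eapply is_derive_ext; [|eapply filterdiff_ext_lin; [exact H3|]].
      intro; reflexivity. intro u. simpl. unfold scal; simpl; unfold mult, plus; simpl. ring. }
    assert (Hc : cont (fun s => 1 * (dq s * es x y (vv s)) + (- x) * (q s * es x y (vv s)) + (- y) * (q s * ec x y (vv s)))).
    { apply (cont_lin3 (fun s => dq s * es x y (vv s)) (fun s => q s * es x y (vv s)) (fun s => q s * ec x y (vv s)));
      [apply (cont_mult dq) | apply (cont_mult q) | apply (cont_mult q)]; auto; first [apply cont_ecv|apply cont_esv]. }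
    assert (HH := RInt_ftc _ _ HF Hc).
    rewrite (RInt_lin3 (fun s => dq s * es x y (vv s)) (fun s => q s * es x y (vv s)) (fun s => q s * ec x y (vv s))) in HH; [| apply ex_LI; exact Hdq | apply ex_LI; exact Hcq | apply ex_LR; exact Hcq].
    unfold LR, LI. unfold vv in HH. 
    replace (/2 - 1) with (-/2) in HH by field. replace (/2 - 0) with (/2) in HH by field.
    unfold vv. lra.
Qed.

Lemma LR_sc x y w t : LR (t*x) (t*y) w = RInt (fun s => w s * ec x y (vv s * t)) 0 1.
Proof. unfold LR. apply RInt_extR. intros. rewrite ec_scale. reflexivity. Qed.
Lemma LI_sc x y w t : LI (t*x) (t*y) w = RInt (fun s => w s * es x y (vv s * t)) 0 1.
Proof. unfold LI. apply RInt_extR. intros. rewrite es_scale. reflexivity. Qed.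

Lemma cont_dec x y : cont (fun r => x * ec x y r - y * es x y r).
Proof. intro r. 
  assert (H := cont_lin3 (ec x y) (es x y) (fun _ => 0) x (-y) 0 (ec_cont x y) (es_cont x y) (cont_const 0) r).
  eapply continuous_ext; [|exact H]. intro; simpl; ring.
Qed.
Lemma cont_des x y : cont (fun r => x * es x y r + y * ec x y r).
Proof. intro r. 
  assert (H := cont_lin3 (es x y) (ec x y) (fun _ => 0) x y 0 (es_cont x y) (ec_cont x y) (cont_const 0) r).
  eapply continuous_ext; [|exact H]. intro; simpl; ring.
Qed.

Lemma LR_dt x y w t : cont w ->
  is_derive (fun t => LR (t*x) (t*y) w) t
    (x * LR (t*x) (t*y) (fun s => w s * vv s) - y * LI (t*x) (t*y) (fun s => w s * vv s)).
Proof.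
  intro Hw.
  assert (H := param_deriv w vv (ec x y) (fun r => x * ec x y r - y * es x y r) t Hw cont_vv (ec_der x y) (cont_dec x y)).
  rewrite LR_sc, LI_sc.
  replace (x * RInt (fun s => w s * vv s * ec x y (vv s * t)) 0 1 - y * RInt (fun s => w s * vv s * es x y (vv s * t)) 0 1)
    with (RInt (fun s => w s * (vv s * (x * ec x y (vv s * t) - y * es x y (vv s * t)))) 0 1).
  - eapply is_derive_ext; [|exact H]. intro u. simpl. rewrite LR_sc. reflexivity.
  - transitivity (RInt (fun s => x * (w s * vv s * ec x y (vv s * t)) + (-y) * (w s * vv s * es x y (vv s * t))) 0 1).
    apply RInt_extR; intros; ring.
    rewrite (RInt_lin2 (fun s => w s * vv s * ec x y (vv s * t)) (fun s => w s * vv s * es x y (vv s * t)) x (-y)).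
    + rring.
    + apply ex_RInt_cont. apply cont_mult. apply cont_mult; auto using cont_vv.
      apply (cont_comp (fun s => vv s * t) (ec x y)). apply cont_mult. apply cont_vv. apply cont_const. apply ec_cont.
    + apply ex_RInt_cont. apply cont_mult. apply cont_mult; auto using cont_vv.
      apply (cont_comp (fun s => vv s * t) (es x y)). apply cont_mult. apply cont_vv. apply cont_const. apply es_cont.
Qed.

Lemma LI_dt x y w t : cont w ->
  is_derive (fun t => LI (t*x) (t*y) w) t
    (x * LI (t*x) (t*y) (fun s => w s * vv s) + y * LR (t*x) (t*y) (fun s => w s * vv s)).
Proof.
  intro Hw.
  assert (H := param_deriv w vv (es x y) (fun r => x * es x y r + y * ec x y r) t Hw cont_vv (es_der x y) (cont_des x y)).
  rewrite LR_sc, LI_sc.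
  replace (x * RInt (fun s => w s * vv s * es x y (vv s * t)) 0 1 + y * RInt (fun s => w s * vv s * ec x y (vv s * t)) 0 1)
    with (RInt (fun s => w s * (vv s * (x * es x y (vv s * t) + y * ec x y (vv s * t)))) 0 1).
  - eapply is_derive_ext; [|exact H]. intro u. simpl. rewrite LI_sc. reflexivity.
  - transitivity (RInt (fun s => x * (w s * vv s * es x y (vv s * t)) + y * (w s * vv s * ec x y (vv s * t))) 0 1).
    apply RInt_extR; intros; ring.
    rewrite (RInt_lin2 (fun s => w s * vv s * es x y (vv s * t)) (fun s => w s * vv s * ec x y (vv s * t)) x y).
    + rring.
    + apply ex_RInt_cont. apply cont_mult. apply cont_mult; auto using cont_vv.
      apply (cont_comp (fun s => vv s * t) (es x y)). apply cont_mult. apply cont_vv. apply cont_const. apply es_cont.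
    + apply ex_RInt_cont. apply cont_mult. apply cont_mult; auto using cont_vv.
      apply (cont_comp (fun s => vv s * t) (ec x y)). apply cont_mult. apply cont_vv. apply cont_const. apply ec_cont.
Qed.

Definition pm (m : nat) (s : R) := (s * (1 - s)) ^ m.

Lemma pm_der m s : is_derive (pm (S m)) s (2 * INR (S m) * (pm m s * vv s)).
Proof. unfold pm, vv. auto_derive; auto. change (match m with 0%nat => 1 | S _ => INR m + 1 end) with (INR (S m)). unfold Rminus. rfield. Qed.
Lemma pmv_der m s : is_derive (fun s => (pm (S m) s * vv s)%R) s
   (2 * INR (S m) * (pm m s * vv s * vv s) + (-1) * pm (S m) s).
Proof. unfold pm, vv. auto_derive; auto. change (match m with 0%nat => 1 | S _ => INR m + 1 end) with (INR (S m)). simpl. unfold Rminus. rfield. Qed.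
Lemma cont_pm m : cont (pm m).
Proof. intro s; apply (ex_derive_continuous (K:=R_AbsRing) (V:=R_NormedModule)); unfold pm; auto_derive; auto. Qed.
Lemma cont_pmv m : cont (fun s => (pm m s * vv s)%R).
Proof. apply cont_mult. apply cont_pm. apply cont_vv. Qed.
Lemma cont_pmvv m : cont (fun s => (pm m s * vv s * vv s)%R).
Proof. apply cont_mult. apply cont_pmv. apply cont_vv. Qed.
Lemma pm_S m s : pm (S m) s = /4 * pm m s + (-1) * (pm m s * vv s * vv s).
Proof. unfold pm, vv. simpl. field. Qed.
Lemma pm_0 m : pm (S m) 0 = 0.
Proof. unfold pm. simpl. ring. Qed.
Lemma pm_1 m : pm (S m) 1 = 0.
Proof. unfold pm. simpl. ring. Qed.

Lemma L_scal z w a : cont w -> L z (fun s => a * w s) = (RtoC a * L z w)%C.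
Proof.
  intro H. rewrite (L_ext z _ (fun s => a * w s + 0 * w s)) by (intros; ring).
  rewrite L_lin by auto. apply Ceq; simpl; ring.
Qed.

Lemma RtoC_nz a : a <> 0 -> RtoC a <> RtoC 0.
Proof. intros H H'. apply H. injection H'. auto. Qed.

Lemma rec1 z m : (z * L z (pm (S m)) = RtoC (2 * INR (S m)) * L z (fun s => (pm m s * vv s)%R))%C.
Proof.
  rewrite (L_ibp z (pm (S m)) (fun s => (2 * INR (S m) * (pm m s * vv s))%R)).
  - rewrite pm_0, pm_1. rewrite L_scal by apply cont_pmv. apply Ceq; simpl; ring.
  - apply pm_der.
  - apply (cont_mult (fun _ => _)). apply cont_const. apply cont_pmv.
Qed.

Lemma rec2 z m : (z * L z (fun s => (pm (S m) s * vv s)%R) =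
   RtoC (2 * INR (S m)) * L z (fun s => (pm m s * vv s * vv s)%R) - L z (pm (S m)))%C.
Proof.
  rewrite (L_ibp z (fun s => (pm (S m) s * vv s)%R) _ (pmv_der m)).
  - rewrite pm_0, pm_1. rewrite L_lin by (apply cont_pmvv || apply cont_pm). apply Ceq; simpl; ring.
  - apply (cont_plus (fun s => 2 * INR (S m) * (pm m s * vv s * vv s)) (fun s => -1 * pm (S m) s)).
    apply (cont_mult (fun _ => _)). apply cont_const. apply cont_pmvv.
    apply (cont_mult (fun _ => _)). apply cont_const. apply cont_pm.
Qed.

Lemma rec3 z m : (L z (pm (S m)) = RtoC (/4) * L z (pm m) - L z (fun s => (pm m s * vv s * vv s)%R))%C.
Proof.
  rewrite (L_ext z _ _ (fun s _ => pm_S m s)).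
  rewrite L_lin by (apply cont_pmvv || apply cont_pm). apply Ceq; simpl; ring.
Qed.

Lemma CE_nz z r : CE z r <> RtoC 0.
Proof.
  intro H. assert (H1 := ec_es_pos (fst z) (snd z) r). unfold CE in H. injection H. intros A B.
  rewrite A, B in H1. lra.
Qed.

Lemma CZ z : z <> RtoC 0 -> forall m, L z (pm m) = RtoC 0 -> L z (fun s => (pm m s * vv s)%R) = RtoC 0 -> False.
Proof.
  intros Hz m. induction m as [|m IH]; intros H1 H2.
  - assert (E1 := L_ibp z (fun _ => 1) (fun _ => 0) (fun s => is_derive_const 1 s) (cont_const 0)).
    assert (E2 := L_ibp z vv (fun _ => -1) (fun s => ltac:(unfold vv; auto_derive; auto; ring)) (cont_const (-1))).
    rewrite (L_ext z (pm 0) (fun _ => 1)) in H1 by (intros; unfold pm; simpl; ring).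
    rewrite (L_ext z (fun s => pm 0 s * vv s) vv) in H2 by (intros; unfold pm; simpl; ring).
    rewrite H1, L_zero in E1. rewrite H2 in E2.
    rewrite (L_ext z (fun _ => -1) (fun s => -1 * 1)) in E2 by (intros; ring).
    rewrite L_scal in E2 by apply cont_const. rewrite H1 in E2.
    unfold vv in E2. 
    apply (CE_nz z (/2)).
    replace (/2 - 0) with (/2) in E2 by ring. replace (/2 - 1) with (-/2) in E2 by field.
    destruct z as [x y]. unfold CE in *. simpl in *.
    assert (A1 := f_equal fst E1). assert (A2 := f_equal snd E1).
    assert (A3 := f_equal fst E2). assert (A4 := f_equal snd E2). simpl in A1, A2, A3, A4.
    apply Ceq; simpl; lra.
  - apply IH.
    + assert (HA2 : L z (fun s => (pm m s * vv s * vv s)%R) = RtoC 0).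
      { assert (R2 := rec2 z m). rewrite H1, H2 in R2.
        assert (Hc : RtoC (2 * INR (S m)) <> RtoC 0) by (apply RtoC_nz; rewrite S_INR; pose proof (pos_INR m); lra).
        transitivity (/ RtoC (2 * INR (S m)) * (RtoC (2 * INR (S m)) * L z (fun s => (pm m s * vv s * vv s)%R)))%C.
        field. exact Hc. 
        replace (RtoC (2 * INR (S m)) * L z (fun s => (pm m s * vv s * vv s)%R))%C with (z * RtoC 0 + RtoC 0)%C by (rewrite R2; ring). ring. }
      assert (R3 := rec3 z m). rewrite H1, HA2 in R3.
      transitivity (4 * (RtoC (/4) * L z (pm m)))%C. apply Ceq; simpl; field.
      transitivity (4 * 0)%C. f_equal. transitivity (RtoC (/4) * L z (pm m) - 0 + 0)%C. ring.
      rewrite <- R3. ring. ring.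
    + assert (R1 := rec1 z m). rewrite H1 in R1.
      assert (Hc : RtoC (2 * INR (S m)) <> RtoC 0) by (apply RtoC_nz; rewrite S_INR; pose proof (pos_INR m); lra).
      transitivity (/ RtoC (2 * INR (S m)) * (RtoC (2 * INR (S m)) * L z (fun s => (pm m s * vv s)%R)))%C.
      field. exact Hc. rewrite <- R1. ring.
Qed.

Lemma mono01 f df : (forall t, is_derive f t (df t)) -> (forall t, 0 <= t <= 1 -> 0 <= df t) -> f 0 <= f 1.
Proof.
  intros Hd Hp.
  destruct (MVT_gen f 0 1 df) as [c [Hc E]].
  - intros; apply Hd.
  - intros t _. apply continuity_pt_filterlim. apply (ex_derive_continuous (K:=R_AbsRing) (V:=R_NormedModule)). eexists; apply Hd.
  - rewrite Rmin_left, Rmax_right in Hc by lra. assert (H := Hp c Hc). nra.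
Qed.

Lemma mono01' f df : (forall t, is_derive f t (df t)) -> (forall t, 0 <= t <= 1 -> df t <= 0) -> f 1 <= f 0.
Proof.
  intros Hd Hp.
  destruct (MVT_gen f 0 1 df) as [c [Hc E]].
  - intros; apply Hd.
  - intros t _. apply continuity_pt_filterlim. apply (ex_derive_continuous (K:=R_AbsRing) (V:=R_NormedModule)). eexists; apply Hd.
  - rewrite Rmin_left, Rmax_right in Hc by lra. assert (H := Hp c Hc). nra.
Qed.

Section Ray.
Variables (x y : R) (m : nat).

Definition pmv s := pm m s * vv s.
Definition pmvv s := pm m s * vv s * vv s.

Definition aR t := LR (t*x) (t*y) (pm m).
Definition aI t := LI (t*x) (t*y) (pm m).
Definition cR t := LR (t*x) (t*y) pmv.
Definition cI t := LI (t*x) (t*y) pmv.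
Definition dR t := LR (t*x) (t*y) pmvv.
Definition dI t := LI (t*x) (t*y) pmvv.
Definition bR t := x * cR t - y * cI t.
Definition bI t := x * cI t + y * cR t.

Lemma aR_d t : is_derive aR t (bR t).
Proof. apply (LR_dt x y (pm m) t (cont_pm m)). Qed.
Lemma aI_d t : is_derive aI t (bI t).
Proof. apply (LI_dt x y (pm m) t (cont_pm m)). Qed.
Lemma cR_d t : is_derive cR t (x * dR t - y * dI t).
Proof. apply (LR_dt x y pmv t (cont_pmv m)). Qed.
Lemma cI_d t : is_derive cI t (x * dI t + y * dR t).
Proof. apply (LI_dt x y pmv t (cont_pmv m)). Qed.
Lemma bR_d t : is_derive bR t (x * (x * dR t - y * dI t) - y * (x * dI t + y * dR t)).
Proof. unfold bR. auto_derive. split; [eexists; apply cR_d| split; [eexists; apply cI_d|auto]].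
  rewrite (is_derive_unique (fun u : R => cR u) _ _ (cR_d t)), (is_derive_unique (fun u : R => cI u) _ _ (cI_d t)). ring. Qed.
Lemma bI_d t : is_derive bI t (x * (x * dI t + y * dR t) + y * (x * dR t - y * dI t)).
Proof. unfold bI. auto_derive. split; [eexists; apply cI_d| split; [eexists; apply cR_d|auto]].
  rewrite (is_derive_unique (fun u : R => cR u) _ _ (cR_d t)), (is_derive_unique (fun u : R => cI u) _ _ (cI_d t)). ring. Qed.

Lemma ode t : 
  (t*x * (/4 * aR t - dR t) - t*y * (/4 * aI t - dI t) = 2 * INR (S m) * cR t) /\
  (t*x * (/4 * aI t - dI t) + t*y * (/4 * aR t - dR t) = 2 * INR (S m) * cI t).
Proof.
  assert (H1 := rec1 (t*x, t*y) m). rewrite rec3 in H1.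
  split.
  - assert (H := f_equal fst H1). simpl in H. change (match m with 0%nat => 1 | S _ => INR m + 1 end) with (INR (S m)) in H. unfold aR, aI, cR, cI, dR, dI, pmv, pmvv. lra.
  - assert (H := f_equal snd H1). simpl in H. change (match m with 0%nat => 1 | S _ => INR m + 1 end) with (INR (S m)) in H. unfold aR, aI, cR, cI, dR, dI, pmv, pmvv. lra.
Qed.

Definition c1 := (2 * m + 1)%nat.
Definition cc := S c1.
Lemma INR_cc : INR cc = 2 * INR (S m).
Proof. unfold cc, c1. rewrite S_INR, plus_INR, mult_INR, (S_INR m). simpl. ring. Qed.

Definition IH t := t ^ cc * (bI t * aR t - bR t * aI t).
Definition RH t := t ^ cc * (bR t * aR t + bI t * aI t).

Lemma prod_d (f g : R -> R) df dg t : is_derive f t df -> is_derive g t dg ->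
  is_derive (fun t => f t * g t) t (df * g t + f t * dg).
Proof. intros H1 H2. apply (is_derive_mult f g t df dg H1 H2 Rmult_comm). Qed.
Lemma minus_d (f g : R -> R) df dg t : is_derive f t df -> is_derive g t dg ->
  is_derive (fun t => f t - g t) t (df - dg).
Proof. intros H1 H2. apply (is_derive_minus f g t df dg H1 H2). Qed.
Lemma plus_d (f g : R -> R) df dg t : is_derive f t df -> is_derive g t dg ->
  is_derive (fun t => f t + g t) t (df + dg).
Proof. intros H1 H2. apply (is_derive_plus f g t df dg H1 H2). Qed.
Lemma powc_d t : is_derive (fun t => t ^ cc) t (INR cc * t ^ c1).
Proof. assert (H := is_derive_pow (fun t => t) cc t 1 (is_derive_id t)). 
  replace (INR cc * t ^ c1) with (INR cc * 1 * t ^ Init.Nat.pred cc). exact H. unfold cc. simpl pred. ring. Qed.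

Lemma IH_d t : is_derive IH t (t ^ cc * (x * y * (aR t ^ 2 + aI t ^ 2) / 2)).
Proof.
  assert (H := prod_d _ _ _ _ t (powc_d t)
     (minus_d _ _ _ _ t (prod_d _ _ _ _ t (bI_d t) (aR_d t)) (prod_d _ _ _ _ t (bR_d t) (aI_d t)))).
  unfold IH. apply (is_derive_val _ _ _ _ H).
  rewrite INR_cc. destruct (ode t) as [E1 E2]. unfold cc. change (t ^ S c1) with (t * t ^ c1).
  transitivity (t ^ c1 * (((x * (2 * INR (S m) * cI t) + y * (2 * INR (S m) * cR t)) * aR t
      - (x * (2 * INR (S m) * cR t) - y * (2 * INR (S m) * cI t)) * aI t)
      + t * ((x * (x * dI t + y * dR t) + y * (x * dR t - y * dI t)) * aR t
           - (x * (x * dR t - y * dI t) - y * (x * dI t + y * dR t)) * aI t))).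
  - unfold bR, bI. rring.
  - rewrite <- E1, <- E2. rfield.
Qed.

Lemma RH_d t : is_derive RH t (t ^ cc * ((x*x - y*y) * (aR t ^ 2 + aI t ^ 2) / 4 + bR t ^ 2 + bI t ^ 2)).
Proof.
  assert (H := prod_d _ _ _ _ t (powc_d t)
     (plus_d _ _ _ _ t (prod_d _ _ _ _ t (bR_d t) (aR_d t)) (prod_d _ _ _ _ t (bI_d t) (aI_d t)))).
  unfold RH. apply (is_derive_val _ _ _ _ H).
  rewrite INR_cc. destruct (ode t) as [E1 E2]. unfold cc. change (t ^ S c1) with (t * t ^ c1).
  transitivity (t ^ c1 * (((x * (2 * INR (S m) * cR t) - y * (2 * INR (S m) * cI t)) * aR t
      + (x * (2 * INR (S m) * cI t) + y * (2 * INR (S m) * cR t)) * aI t)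
      + t * ((x * (x * dR t - y * dI t) - y * (x * dI t + y * dR t)) * aR t
           + (x * (x * dI t + y * dR t) + y * (x * dR t - y * dI t)) * aI t)
      + t * (bR t ^ 2 + bI t ^ 2))).
  - unfold bR, bI. rring.
  - rewrite <- E1, <- E2. rfield.
Qed.

Lemma pow0c : 0 ^ cc = 0.
Proof. unfold cc. simpl. ring. Qed.

Lemma ray_main : (x, y) <> RtoC 0 -> 0 <= x ->
  (RtoC (/2) * L (x, y) (pm m) + L (x, y) pmv = RtoC 0)%C -> False.
Proof.
  intros Hz Hx HB.
  assert (EA : aR 1 = LR x y (pm m)) by (unfold aR; rewrite !Rmult_1_l; reflexivity).
  assert (EB : aI 1 = LI x y (pm m)) by (unfold aI; rewrite !Rmult_1_l; reflexivity).
  assert (EC : cR 1 = LR x y pmv) by (unfold cR; rewrite !Rmult_1_l; reflexivity).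
  assert (ED : cI 1 = LI x y pmv) by (unfold cI; rewrite !Rmult_1_l; reflexivity).
  assert (H1 := f_equal fst HB). assert (H2 := f_equal snd HB). simpl in H1, H2.
  assert (C1 : cR 1 = - aR 1 / 2) by (rewrite EA, EC; lra).
  assert (C2 : cI 1 = - aI 1 / 2) by (rewrite EB, ED; lra).
  assert (I1 : IH 1 = - y * (aR 1 ^ 2 + aI 1 ^ 2) / 2).
  { unfold IH, bR, bI. rewrite C1, C2, pow1. field. }
  assert (R1 : RH 1 = - x * (aR 1 ^ 2 + aI 1 ^ 2) / 2).
  { unfold RH, bR, bI. rewrite C1, C2, pow1. field. }
  assert (I0 : IH 0 = 0) by (unfold IH; rewrite pow0c; ring).
  assert (R0 : RH 0 = 0) by (unfold RH; rewrite pow0c; ring).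
  assert (Hsq : 0 <= aR 1 ^ 2 + aI 1 ^ 2) by nra.
  assert (Q : forall t, 0 <= t <= 1 -> 0 <= t ^ cc * (aR t ^ 2 + aI t ^ 2)).
  { intros t Ht. apply Rmult_le_pos. apply pow_le; lra. nra. }
  assert (Z : aR 1 ^ 2 + aI 1 ^ 2 <= 0).
  { destruct (Rtotal_order y 0) as [Hy|[Hy|Hy]].
    - assert (M := mono01' IH _ IH_d).
      assert (M' : IH 1 <= IH 0).
      { apply M. intros t Ht. specialize (Q t Ht).
        replace (t ^ cc * (x * y * (aR t ^ 2 + aI t ^ 2) / 2)) with ((x * y / 2) * (t ^ cc * (aR t ^ 2 + aI t ^ 2))) by field.
        assert (x * y / 2 <= 0) by nra. nra. }
      rewrite I1, I0 in M'. nra.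
    - assert (Hx' : x <> 0) by (intro Hx0; apply Hz; rewrite Hx0, Hy; reflexivity).
      assert (M := mono01 RH _ RH_d).
      assert (M' : RH 0 <= RH 1).
      { apply M. intros t Ht. specialize (Q t Ht).
        assert (0 <= t ^ cc) by (apply pow_le; lra).
        assert (0 <= t ^ cc * (bR t ^ 2 + bI t ^ 2)) by (apply Rmult_le_pos; nra).
        rewrite Hy. replace (t ^ cc * ((x * x - 0 * 0) * (aR t ^ 2 + aI t ^ 2) / 4 + bR t ^ 2 + bI t ^ 2))
          with ((x * x / 4) * (t ^ cc * (aR t ^ 2 + aI t ^ 2)) + t ^ cc * (bR t ^ 2 + bI t ^ 2)) by field.
        assert (0 <= x * x / 4) by nra. nra. }
      rewrite R1, R0 in M'. assert (0 < x) by lra. nra.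
    - assert (M := mono01 IH _ IH_d).
      assert (M' : IH 0 <= IH 1).
      { apply M. intros t Ht. specialize (Q t Ht).
        replace (t ^ cc * (x * y * (aR t ^ 2 + aI t ^ 2) / 2)) with ((x * y / 2) * (t ^ cc * (aR t ^ 2 + aI t ^ 2))) by field.
        assert (0 <= x * y / 2) by nra. nra. }
      rewrite I1, I0 in M'. nra. }
  assert (ZA : aR 1 = 0) by nra. assert (ZB : aI 1 = 0) by nra.
  apply (CZ (x, y) Hz m).
  - apply Ceq; simpl; [rewrite <- EA | rewrite <- EB]; assumption.
  - apply Ceq; simpl; fold pmv; [rewrite <- EC, C1 | rewrite <- ED, C2]; rewrite ?ZA, ?ZB; field.
Qed.


End Ray.

Definition P (c : nat -> R) (N : nat) (s : R) := sum_f_R0 (fun i => c i * s ^ i) N.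
Definition dc (c : nat -> R) (i : nat) := INR (S i) * c (S i).
Fixpoint dcn (j : nat) (c : nat -> R) : nat -> R :=
  match j with O => c | S j' => dc (dcn j' c) end.

Lemma mono_d a k s : is_derive (fun s => a * s ^ S k) s (a * INR (S k) * s ^ k).
Proof. auto_derive; auto. simpl pred. change (match k with 0%nat => 1 | S _ => INR k + 1 end) with (INR (S k)). ring. Qed.

Lemma P_der_S c N s : is_derive (P c (S N)) s (P (dc c) N s).
Proof.
  revert s. induction N as [|N IH]; intro s.
  - unfold P, dc. simpl. auto_derive; auto. simpl. ring.
  - assert (H := is_derive_plus _ _ s _ _ (IH s) (mono_d (c (S (S N))) (S N) s)).
    eapply is_derive_ext; [|eapply is_derive_val; [exact H|]].
    + intro t. unfold P. simpl. reflexivity.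
    + unfold P, dc. simpl. unfold plus; simpl. ring.
Qed.

Lemma P_ext c c' N s : (forall i, (i <= N)%nat -> c i = c' i) -> P c N s = P c' N s.
Proof. intro H. unfold P. apply sum_eq. intros i Hi. rewrite H; auto. Qed.

Lemma P_der c N s : c (S N) = 0 -> is_derive (P c N) s (P (dc c) N s).
Proof.
  intro Hc. eapply is_derive_ext; [|apply P_der_S]. intro t. unfold P. simpl. rewrite Hc. ring.
Qed.

Lemma dcn_val j c i : dcn j c i = INR (fact (i + j)) / INR (fact i) * c (i + j)%nat.
Proof.
  revert i. induction j as [|j IH]; intro i.
  - simpl. rewrite Nat.add_0_r. field. apply INR_fact_neq_0.
  - simpl dcn. unfold dc. rewrite IH. replace (S i + j)%nat with (i + S j)%nat by lia.
    rewrite (fact_simpl i), mult_INR. field. split; [apply INR_fact_neq_0|]. rewrite S_INR. pose proof (pos_INR i); lra.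
Qed.

Lemma dcn_0 j c : dcn j c 0 = INR (fact j) * c j.
Proof. rewrite dcn_val. simpl. field. Qed.

Lemma dcn_vanish j c N : (forall i, (N < i)%nat -> c i = 0) -> forall i, (N < i)%nat -> dcn j c i = 0.
Proof. intros H i Hi. rewrite dcn_val, H by lia. ring. Qed.

Lemma P_at0 c N : P c N 0 = c 0%nat.
Proof. unfold P. induction N as [|N IH]. simpl. ring. simpl. rewrite IH. ring. Qed.

Lemma P_zero c N s : (forall i, (i <= N)%nat -> c i = 0) -> P c N s = 0.
Proof. intro H. unfold P. induction N as [|N IH]. simpl. rewrite H; auto; ring.
  simpl. rewrite IH by auto. rewrite H; auto; ring. Qed.

Lemma P_rev_der d N s : d (S N) = 0 -> is_derive (fun s => P d N (1 - s)) s (- P (dc d) N (1 - s)).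
Proof.
  intro Hd. assert (H1 := P_der d N (1 - s) Hd).
  assert (H2 : is_derive (fun s : R => 1 - s) s (-1)) by (auto_derive; auto; ring).
  assert (H := is_derive_comp (P d N) (fun s => 1 - s) s _ _ H1 H2).
  eapply is_derive_val. exact H. simpl. unfold scal; simpl; unfold mult; simpl. ring.
Qed.

Lemma two_reps c d N : (forall i, (N < i)%nat -> c i = 0) -> (forall i, (N < i)%nat -> d i = 0) ->
  (forall s, P c N s = P d N (1 - s)) ->
  forall j s, P (dcn j c) N s = (-1) ^ j * P (dcn j d) N (1 - s).
Proof.
  intros Hc Hd H0 j. induction j as [|j IH]; intro s.
  - simpl. rewrite H0. ring.
  - assert (A := P_der (dcn j c) N s (dcn_vanish j c N Hc (S N) (Nat.lt_succ_diag_r N))).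
    assert (B := P_rev_der (dcn j d) N s (dcn_vanish j d N Hd (S N) (Nat.lt_succ_diag_r N))).
    assert (B' : is_derive (fun s => (-1) ^ j * P (dcn j d) N (1 - s)) s ((-1) ^ j * (- P (dcn (S j) d) N (1 - s)))).
    { apply is_derive_scal. exact B. }
    assert (A' : is_derive (fun s => (-1) ^ j * P (dcn j d) N (1 - s)) s (P (dcn (S j) c) N s)).
    { eapply is_derive_ext; [|exact A]. intro t. apply IH. }
    rewrite <- (is_derive_unique _ _ _ A'), (is_derive_unique _ _ _ B'). simpl. ring.
Qed.

Fixpoint cs (f : nat -> C) (k : nat) : C :=
  match k with O => RtoC 0 | S k' => (cs f k' + f k')%C end.

Lemma cs_ext f g k : (forall j, (j < k)%nat -> f j = g j) -> cs f k = cs g k.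
Proof. induction k as [|k IH]; intro H; simpl. reflexivity. f_equal. apply IH; intros; apply H; lia. apply H; lia. Qed.

Lemma cs_mult a f k : (a * cs f k = cs (fun j => a * f j) k)%C.
Proof. induction k as [|k IH]; simpl. ring. rewrite <- IH. ring. Qed.

Lemma cs_plus f g k : (cs f k + cs g k = cs (fun j => f j + g j) k)%C.
Proof. induction k as [|k IH]; simpl. ring. rewrite <- IH. ring. Qed.

Lemma cs_app f a b : cs f (a + b) = (cs f a + cs (fun k => f (a + k)%nat) b)%C.
Proof. induction b as [|b IH]; simpl. rewrite Nat.add_0_r. ring. rewrite Nat.add_succ_r. simpl. rewrite IH. ring. Qed.

Lemma cs_shift f k : cs f (S k) = (f 0%nat + cs (fun j => f (S j)) k)%C.
Proof. induction k as [|k IH]. simpl. ring. change (cs f (S (S k))) with (cs f (S k) + f (S k))%C. rewrite IH. simpl. ring. Qed.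

Lemma cs_rev f N : cs f (S N) = cs (fun k => f (N - k)%nat) (S N).
Proof.
  induction N as [|N IH]. simpl. reflexivity.
  change (cs f (S (S N))) with (cs f (S N) + f (S N))%C. rewrite IH.
  rewrite (cs_shift (fun k => f (S N - k)%nat) (S N)). rewrite Nat.sub_0_r.
  simpl (fun j => f (S N - S j)%nat). ring.
Qed.

Lemma cs_zero f k : (forall j, (j < k)%nat -> f j = RtoC 0) -> cs f k = RtoC 0.
Proof. intro H. rewrite (cs_ext f (fun _ => RtoC 0)) by auto. induction k; simpl. reflexivity. 
  rewrite IHk. ring. intros; auto. Qed.

Lemma sum_n_cs (f : nat -> C) m : sum_n f m = cs f (S m).
Proof.
  induction m as [|m IH]. rewrite sum_O. simpl. ring.
  rewrite sum_Sn, IH. reflexivity.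
Qed.

Lemma iter_ibp z (r : nat -> R -> R) : (forall j s, is_derive (r j) s (r (S j) s)) ->
  forall k, (Cpow z k * L z (r 0%nat) =
    cs (fun j => Cpow z (k - 1 - j) * (RtoC (r j 0) * CE z (/2) - RtoC (r j 1) * CE z (-/2))) k + L z (r k))%C.
Proof.
  intros Hr k. induction k as [|k IH].
  - simpl. ring.
  - change (Cpow z (S k)) with (z * Cpow z k)%C.
    rewrite <- Cmult_assoc, IH, Cmult_plus_distr_l.
    rewrite (L_ibp z (r k) (r (S k)) (Hr k) (cont_der _ _ (Hr (S k)))).
    simpl cs. rewrite cs_mult.
    rewrite (cs_ext (fun j => z * (Cpow z (k - 1 - j) * _))%C
                    (fun j => Cpow z (S k - 1 - j) * (RtoC (r j 0) * CE z (/2) - RtoC (r j 1) * CE z (-/2)))%C).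
    + replace (k - 0 - k)%nat with 0%nat by lia. simpl Cpow. ring.
    + intros j Hj. replace (S k - 1 - j)%nat with (S (k - 1 - j)) by lia. simpl Cpow. ring.
Qed.

Lemma CE_mult z a b : (CE z a * CE z b = CE z (a + b))%C.
Proof. destruct z as [x y]. unfold CE. simpl. rewrite ec_add, es_add. apply Ceq; simpl; ring. Qed.

Lemma CE_0 z : CE z 0 = RtoC 1.
Proof. destruct z as [x y]. unfold CE. simpl. rewrite ec_0, es_0. reflexivity. Qed.

Lemma CE_m1 z : CE z (-1) = Cexp (- z).
Proof. destruct z as [x y]. rewrite Cexp_CE. reflexivity. Qed.

Definition shift (K M : nat) (g : nat -> R) (i : nat) : R :=
  if andb (K <=? i)%nat (i <=? K + M)%nat then g (i - K)%nat else 0.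

Lemma shift_P K M g s : P (shift K M g) (K + M) s = s ^ K * P g M s.
Proof.
  revert M. induction K as [|K IH]; intro M.
  - simpl. unfold P. rewrite Rmult_1_l. apply sum_eq. intros i Hi. unfold shift.
    simpl. replace (i <=? M)%nat with true by (symmetry; apply Nat.leb_le; lia). rewrite Nat.sub_0_r. reflexivity.
  - unfold P. simpl (S K + M)%nat. rewrite decomp_sum by lia. simpl pred.
    unfold shift at 1. simpl. rewrite Rmult_0_l, Rplus_0_l.
    rewrite (sum_eq _ (fun i => (shift K M g i * s ^ i) * s)).
    + rewrite <- scal_sum. fold (P (shift K M g) (K + M) s). rewrite IH. unfold P. ring.
    + intros i Hi. unfold shift. simpl. ring.
Qed.

Lemma sq_m1 a : (-1) ^ a * (-1) ^ a = 1.
Proof. induction a; simpl. ring. replace (-1 * (-1) ^ a * (-1 * (-1) ^ a)) with ((-1)^a * (-1)^a) by ring. exact IHa. Qed.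

Lemma binom_1ms n s : (1 - s) ^ n = P (fun i => (-1) ^ i * Binomial.C n i) n s.
Proof.
  replace (1 - s) with (- s + 1) by ring. rewrite binomial. unfold P. apply sum_eq. intros i Hi.
  rewrite pow1. replace (- s) with (-1 * s) by ring. rewrite Rpow_mult_distr. ring.
Qed.

Section Poly.
Variable m : nat.

Definition NN := (m + S m)%nat.
Definition gc i := (-1) ^ i * Binomial.C (S m) i.
Definition gd i := (-1) ^ i * Binomial.C m i.
Definition cf := shift m (S m) gc.
Definition df := shift (S m) m gd.

Lemma cf_base s : P cf NN s = pm m s * (1 - s).
Proof.
  unfold cf, NN. rewrite shift_P. unfold gc. rewrite <- binom_1ms. unfold pm.
  rewrite Rpow_mult_distr. simpl. ring.
Qed.

Lemma df_base s : P df NN (1 - s) = pm m s * (1 - s).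
Proof.
  unfold df, NN. replace (m + S m)%nat with (S m + m)%nat by lia. rewrite shift_P. unfold gd.
  rewrite <- binom_1ms. unfold pm. replace (1 - (1 - s)) with s by ring.
  rewrite Rpow_mult_distr. simpl. ring.
Qed.

Lemma cf_van i : (NN < i)%nat -> cf i = 0.
Proof. intro H. unfold cf, shift, NN in *. replace (i <=? m + S m)%nat with false by (symmetry; apply Nat.leb_gt; lia).
  rewrite Bool.andb_false_r. reflexivity. Qed.
Lemma df_van i : (NN < i)%nat -> df i = 0.
Proof. intro H. unfold df, shift, NN in *. replace (i <=? S m + m)%nat with false by (symmetry; apply Nat.leb_gt; lia).
  rewrite Bool.andb_false_r. reflexivity. Qed.

Definition rr j := P (dcn j cf) NN.

Lemma rr_der j s : is_derive (rr j) s (rr (S j) s).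
Proof. unfold rr. apply P_der. apply (dcn_vanish j cf NN cf_van). lia. Qed.

Lemma rr_0 j : rr j 0 = INR (fact j) * cf j.
Proof. unfold rr. rewrite P_at0, dcn_0. reflexivity. Qed.

Lemma rr_1 j : rr j 1 = (-1) ^ j * (INR (fact j) * df j).
Proof.
  unfold rr. rewrite (two_reps cf df NN cf_van df_van) .
  - replace (1 - 1) with 0 by ring. rewrite P_at0, dcn_0. reflexivity.
  - intro s. rewrite cf_base. rewrite <- df_base. reflexivity.
Qed.

Lemma rr_last s : rr (S NN) s = 0.
Proof. unfold rr. apply P_zero. intros i Hi. rewrite dcn_val, cf_van by lia. ring. Qed.

Lemma main_ibp z : (Cpow z (S NN) * L z (fun s => (pm m s * (1 - s))%R) =
    cs (fun j => Cpow z (NN - j) * (RtoC (rr j 0) * CE z (/2) - RtoC (rr j 1) * CE z (-/2))) (S NN))%C.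
Proof.
  rewrite (L_ext z _ (rr 0)) by (intros; unfold rr; simpl; rewrite cf_base; reflexivity).
  rewrite (iter_ibp z rr rr_der (S NN)).
  rewrite (L_ext z (rr (S NN)) (fun _ => 0)) by (intros; apply rr_last).
  rewrite L_zero. 
  replace (S NN - 1)%nat with NN by lia. ring.
Qed.

End Poly.

Lemma fnz n : INR (fact n) <> 0.
Proof. apply INR_fact_neq_0. Qed.

Lemma coefA m k : (k <= m)%nat -> rr m (NN m - k) 0 = INR (fact m) * bcoef (S m) k.
Proof.
  intro Hk. rewrite rr_0. unfold cf, shift, NN, gc, bcoef.
  replace (m <=? m + S m - k)%nat with true by (symmetry; apply Nat.leb_le; lia).
  replace (m + S m - k <=? m + S m)%nat with true by (symmetry; apply Nat.leb_le; lia).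
  simpl andb. cbv iota.
  replace (m + S m - k - m)%nat with (S m - k)%nat by lia.
  replace (2 * S m - k - 1)%nat with (m + S m - k)%nat by lia.
  replace (S m - 1)%nat with m by lia.
  unfold Binomial.C.
  replace (S m - (S m - k))%nat with k by lia.
  replace (m + S m - k - m)%nat with (S m - k)%nat by lia.
  field. repeat split; apply fnz.
Qed.

Lemma coefB m k : (k <= m)%nat -> rr m (NN m - k) 1 = - (INR (fact m) * betacoef (S m) k).
Proof.
  intro Hk. rewrite rr_1. unfold df, shift, NN, gd, betacoef.
  replace (S m <=? m + S m - k)%nat with true by (symmetry; apply Nat.leb_le; lia).
  replace (m + S m - k <=? S m + m)%nat with true by (symmetry; apply Nat.leb_le; lia).
  simpl andb. cbv iota.
  replace (m + S m - k - S m)%nat with (m - k)%nat by lia.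
  replace (2 * S m - k - 1)%nat with (m + S m - k)%nat by lia.
  replace (S m - 1)%nat with m by lia.
  replace (S m - k - 1)%nat with (m - k)%nat by lia.
  unfold Binomial.C.
  replace (m - (m - k))%nat with k by lia.
  replace (m + S m - k)%nat with ((m - k) + S m)%nat at 1 by lia.
  rewrite pow_add. simpl ((-1) ^ S m).
  replace (m + S m - k)%nat with ((m - k) + S m)%nat by lia.
  assert (Hs := sq_m1 (m - k)).
  transitivity ((-1) ^ (m - k) * (-1) ^ (m - k) * (-1 * (-1) ^ m * (INR (fact (m - k + S m)) * (INR (fact m) / (INR (fact (m - k)) * INR (fact k)))))).
  ring. rewrite Hs. rfield. repeat split; apply fnz.
Qed.


Lemma coefC0 m : rr m (NN m - S m) 0 = INR (fact m).
Proof.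
  rewrite rr_0. unfold cf, shift, NN, gc.
  replace (m + S m - S m)%nat with m by lia.
  replace (m <=? m)%nat with true by (symmetry; apply Nat.leb_le; lia).
  replace (m <=? m + S m)%nat with true by (symmetry; apply Nat.leb_le; lia).
  simpl andb. cbv iota. rewrite Nat.sub_diag. unfold Binomial.C.
  rewrite Nat.sub_0_r. simpl (fact 0). simpl pow. change (INR 1) with 1. assert (HH := fnz (S m)). change (INR (fact m) * (1 * (INR (fact (S m)) / (1 * INR (fact (S m))))) = INR (fact m)). field. exact HH.
Qed.

Lemma coefC1 m : rr m (NN m - S m) 1 = 0.
Proof.
  rewrite rr_1. unfold df, shift, NN.
  replace (m + S m - S m)%nat with m by lia.
  replace (S m <=? m)%nat with false by (symmetry; apply Nat.leb_gt; lia).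
  simpl andb. cbv iota. ring.
Qed.

Lemma coefD0 m k : (k < m)%nat -> rr m (NN m - (S m + S k)) 0 = 0.
Proof.
  intro Hk. rewrite rr_0. unfold cf, shift, NN.
  replace (m <=? m + S m - (S m + S k))%nat with false by (symmetry; apply Nat.leb_gt; lia).
  simpl andb. cbv iota. ring.
Qed.

Lemma coefD1 m k : (k < m)%nat -> rr m (NN m - (S m + S k)) 1 = 0.
Proof.
  intro Hk. rewrite rr_1. unfold df, shift, NN.
  replace (S m <=? m + S m - (S m + S k))%nat with false by (symmetry; apply Nat.leb_gt; lia).
  simpl andb. cbv iota. ring.
Qed.

Lemma final_id m z : (RtoC (INR (fact m)) * Delta_tilde (S m) z =
   Cpow z (S (NN m)) * L z (fun s => (pm m s * (1 - s))%R) * CE z (-/2))%C.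
Proof.
  rewrite main_ibp.
  rewrite (Cmult_comm _ (CE z (-/2))), cs_mult.
  rewrite (cs_ext _ (fun j => Cpow z (NN m - j) * (RtoC (rr m j 0) - RtoC (rr m j 1) * Cexp (- z)))%C).
  2: { intros j _. 
       transitivity (Cpow z (NN m - j) * (RtoC (rr m j 0) * (CE z (/2) * CE z (-/2)) - RtoC (rr m j 1) * (CE z (-/2) * CE z (-/2))))%C.
       ring. rewrite !CE_mult. replace (/2 + - /2) with 0 by field. replace (-/2 + -/2) with (-1) by field.
       rewrite CE_0, CE_m1. ring. }
  rewrite cs_rev.
  rewrite (cs_ext _ (fun k => Cpow z k * (RtoC (rr m (NN m - k) 0) - RtoC (rr m (NN m - k) 1) * Cexp (- z)))%C).
  2: { intros k Hk. replace (NN m - (NN m - k))%nat with k by (unfold NN in *; lia). reflexivity. }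
  change (S (NN m)) with (S m + S m)%nat.
  rewrite cs_app.
  rewrite (cs_shift (fun k => Cpow z (S m + k) * (RtoC (rr m (NN m - (S m + k)) 0) - RtoC (rr m (NN m - (S m + k)) 1) * Cexp (- z)))%C m).
  rewrite (cs_zero (fun j => Cpow z (S m + S j) * (RtoC (rr m (NN m - (S m + S j)) 0) - RtoC (rr m (NN m - (S m + S j)) 1) * Cexp (- z)))%C).
  2: { intros j Hj. rewrite coefD0, coefD1 by lia. ring. }
  rewrite Nat.add_0_r, coefC0, coefC1.
  rewrite (cs_ext _ (fun k => RtoC (INR (fact m)) * (RtoC (bcoef (S m) k) * Cpow z k) + Cexp (- z) * (RtoC (INR (fact m)) * (RtoC (betacoef (S m) k) * Cpow z k)))%C).
  2: { intros k Hk. rewrite coefA, coefB by lia. rewrite RtoC_opp, !RtoC_mult. ring. }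
  rewrite <- cs_plus, <- !cs_mult.
  unfold Delta_tilde. rewrite !sum_n_cs. replace (S (S m - 1)) with (S m) by lia.
  ring.
Qed.

Lemma Cmult_l0 (a b : C) : a <> RtoC 0 -> (a * b = RtoC 0)%C -> b = RtoC 0.
Proof. intros Ha H. transitivity (/ a * (a * b))%C. field. exact Ha. rewrite H. ring. Qed.

Lemma Cpow_nz z k : z <> RtoC 0 -> Cpow z k <> RtoC 0.
Proof.
  intros Hz. induction k as [|k IH]; simpl.
  - intro H. injection H. lra.
  - intro H. apply IH. apply (Cmult_l0 z); assumption.
Qed.

Theorem lemma4p6 (n : nat) (z : C) :
  (0 < n)%nat -> z <> RtoC 0 -> Delta_tilde n z = RtoC 0 -> Re z < 0.
Proof.
  intros Hn Hz HD. destruct n as [|m]; [lia|].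
  destruct (Rlt_or_le (Re z) 0) as [H|H]; [exact H|]. exfalso.
  assert (E := final_id m z). rewrite HD in E.
  assert (E' : (Cpow z (S (NN m)) * L z (fun s => (pm m s * (1 - s))%R) * CE z (-/2) = RtoC 0)%C).
  { rewrite <- E. ring. }
  rewrite Cmult_comm in E'. apply Cmult_l0 in E'; [|apply CE_nz].
  apply Cmult_l0 in E'; [|apply Cpow_nz; exact Hz].
  rewrite (L_ext z _ (fun s => /2 * pm m s + 1 * (pm m s * vv s))) in E' by (intros; unfold vv; field).
  rewrite L_lin in E' by (apply cont_pm || apply cont_pmv).
  destruct z as [x y]. simpl in H.
  apply (ray_main x y m Hz H).
  rewrite <- E'. unfold pmv. apply Ceq; simpl; ring.
Qed.
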